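(* Let $G=G_+G_-$ be a unique factorization of a finite group $G$, and let $R\in H(G;G_+,G_-)\otimes H(G;G_+,G_-)$ be invertible and positive, with $R^{-1}$ also positive. Then there exist a subset $\mathcal R\subset G\times G$ and a function $r:\mathcal R\to\mathbb R_{>0}$ such that (1) the restriction of the map $G\times G\to G_+\times G_+$, $(g,h)\mapsto(g_+,h_+)$, to $\mathcal R$ is a bijection onto $G_+\times G_+$; and (2) $R=\sum_{(g,h)\in\mathcal R} r(g,h)\,\{g\}\otimes\{h\}$.
   Context: A unique factorization $G=G_+G_-$ consists of subgroups $G_+,G_-$ such that every $g\in G$ is uniquely $g=g_+g_-$ with $g_+\in G_+$, $g_-\in G_-$. For $u\in G_+$, $x\in G_-$ define ${}^u x\in G_-$, $u^x\in G_+$, ${}^x u\in G_+$, $x^u\in G_-$ by $ux=({}^u x)(u^x)$ and $xu=({}^x u)(x^u)$. $H(G;G_+,G_-)$ is the complex vector space with basis $\{g\}$, $g\in G$, and Hopf algebra structure: $\{g\}\{h\}=\delta_{g_+^{\,g_-},\,h_+}\{g h_-\}$; unit $1=\sum_{u\in G_+}\{u\}$; $\Delta\{g\}=\sum_{h\in G_+}\{g_+h^{-1}({}^{h}g_-)\}\otimes\{h g_-\}$; $\varepsilon\{g\}=\delta_{g_+,e}$; $S\{g\}=\{g^{-1}\}$. An element of $H(G;G_+,G_-)\otimes H(G;G_+,G_-)$ is positive if it is a linear combination of the $\{g\}\otimes\{h\}$ with non-negative real coefficients. *)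

(* Defs.v *)
From HB Require Import structures.
From mathcomp Require Import all_boot all_order all_algebra all_fingroup.
From mathcomp Require Import reals complex.
Set Implicit Arguments. Unset Strict Implicit. Unset Printing Implicit Defensive.
Import GRing.Theory Num.Theory.
Local Open Scope ring_scope.

Section HopfDefs.
Variables (gT : finGroupType).

(* G = [set: gT]; G = G+ G- is a unique factorization. *)
Definition unique_factorization (Gp Gm : {group gT}) : Prop :=
  forall g : gT, exists! ab : gT * gT,
    [/\ ab.1 \in Gp, ab.2 \in Gm & g = (ab.1 * ab.2)%g].

Definition fact1 (A B : {set gT}) (g : gT) : gT :=
  odflt 1%g [pick a in A | (a^-1 * g)%g \in B].
Definition fact2 (A B : {set gT}) (g : gT) : gT := ((fact1 A B g)^-1 * g)%g.

Variables (Gp Gm : {group gT}).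

Definition gplus (g : gT) : gT := fact1 Gp Gm g.
Definition gminus (g : gT) : gT := fact2 Gp Gm g.

(* For u \in G+, x \in G- : u x = (^u x)(u^x), ^u x \in G-, u^x \in G+. *)
Definition ract (u x : gT) : gT := fact2 Gm Gp (u * x)%g.

Variable C : numDomainType.

(* Elements of H and of H (x) H, as coefficient functions on the basis. *)
Definition H := {ffun gT -> C}.
Definition H2 := {ffun gT * gT -> C}.

(* Structure constant: {g}{h} = [g_+^{g_-} = h_+] {g h_-}. *)
Definition mul_coef (g h k : gT) : C :=
  ((ract (gplus g) (gminus g) == gplus h) && (k == g * gminus h)%g)%:R.

Definition mul2 (A B : H2) : H2 :=
  [ffun k : gT * gT => \sum_(g : gT * gT) \sum_(h : gT * gT)
     A g * B h * mul_coef g.1 h.1 k.1 * mul_coef g.2 h.2 k.2].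

(* Unit 1 (x) 1, with 1 = \sum_{u \in G+} {u}. *)
Definition one2 : H2 := [ffun k : gT * gT => ((k.1 \in Gp) && (k.2 \in Gp))%:R].

Definition invertible2 (A B : H2) : Prop := mul2 A B = one2 /\ mul2 B A = one2.

Definition positive2 (A : H2) : Prop := forall k, 0 <= A k.

Definition basis2 (p : gT * gT) : H2 := [ffun k => (k == p)%:R].

End HopfDefs.

(* Main.v *)
Require Import Defs.
From HB Require Import structures.
From mathcomp Require Import all_boot all_order all_algebra all_fingroup.
From mathcomp Require Import reals complex.
Import GRing.Theory Num.Theory.
Local Open Scope ring_scope.

Section Fact.
Variables (gT : finGroupType) (A B : {group gT}).
Local Open Scope group_scope.
Hypothesis cover : forall g : gT, exists a b, [/\ a \in A, b \in B & g = a * b]%g.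
Hypothesis triv : forall x : gT, x \in A -> x \in B -> x = 1%g.

Lemma fact_mul g : (fact1 A B g * fact2 A B g)%g = g.
Proof. by rewrite /fact2 mulKVg. Qed.

Lemma fact_in g : fact1 A B g \in A /\ fact2 A B g \in B.
Proof.
rewrite /fact2 /fact1; case: pickP => [a /andP[] //|H].
case: (cover g) => a [b [Ha Hb E]].
by have := H a; rewrite Ha /= E mulKg Hb.
Qed.

Lemma fact_uniq a b : a \in A -> b \in B ->
  fact1 A B (a * b) = a /\ fact2 A B (a * b) = b.
Proof.
move=> Ha Hb; have [H1 H2] := fact_in (a * b).
have E := fact_mul (a * b).
have E2 : (a^-1 * fact1 A B (a * b) = b * (fact2 A B (a * b))^-1)%g.
  by rewrite -[LHS](mulgK (fact2 A B (a * b))) -(mulgA a^-1) E mulKg.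
have E3 : (a^-1 * fact1 A B (a * b) = 1)%g.
  by apply: triv; [rewrite groupM ?groupV | rewrite E2 groupM ?groupV].
have E4 : fact1 A B (a * b) = a.
  by apply/eqP; rewrite eq_sym eq_mulVg1 E3.
split => //; by rewrite /fact2 E4 mulKg.
Qed.
End Fact.

Theorem proposition2 (R : realType) (gT : finGroupType) (Gp Gm : {group gT})
  (Rm : H2 gT R[i]) :
  unique_factorization Gp Gm ->
  positive2 Rm ->
  (exists Rinv : H2 gT R[i], invertible2 Gp Gm Rm Rinv /\ positive2 Rinv) ->
  exists (Rs : {set gT * gT}) (r : gT * gT -> R[i]),
    [/\ (forall p, p \in Rs -> 0 < r p),
        {in Rs &, injective (fun p : gT * gT => (gplus Gp Gm p.1, gplus Gp Gm p.2))},
        [set (gplus Gp Gm p.1, gplus Gp Gm p.2) | p in Rs] = setX Gp Gp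
      & Rm = \sum_(p in Rs) r p *: basis2 R[i] p].
Proof.
move=> uf pos [Ri [[inv1 inv2] posi]].
have covP : forall g : gT, exists a b, [/\ a \in Gp, b \in Gm & g = a * b]%g.
  by move=> g; case: (uf g) => [[a b] [[/= Ha Hb E] _]]; exists a, b.
have trivP : forall x : gT, x \in Gp -> x \in Gm -> x = 1%g.
  move=> x Hp Hm; case: (uf x) => ab [_ U].
  have e1 := U (x, 1%g) (And3 Hp (group1 Gm) (esym (mulg1 x))).
  have e2 := U (1%g, x) (And3 (group1 Gp) Hm (esym (mul1g x))).
  by move: e2; rewrite e1 => -[].
have covM : forall g : gT, exists a b, [/\ a \in Gm, b \in Gp & g = a * b]%g.
  move=> g; case: (covP (g^-1)%g) => a [b [Ha Hb E]].
  exists (b^-1)%g, (a^-1)%g; split; rewrite ?groupV //.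
  by rewrite -invMg -E invgK.
have trivM : forall x : gT, x \in Gm -> x \in Gp -> x = 1%g.
  by move=> x Hm Hp; apply: trivP.
pose gp := gplus Gp Gm; pose gm := gminus Gp Gm.
pose rr := fact2 Gm Gp.
have gpm g : (gp g * gm g)%g = g by exact: fact_mul.
have gpin g : gp g \in Gp by case: (@fact_in _ _ _ covP g).
have gmin g : gm g \in Gm by case: (@fact_in _ _ _ covP g).
have gp_uniq a b : a \in Gp -> b \in Gm -> gp (a * b)%g = a /\ gm (a * b)%g = b.
  exact: (@fact_uniq _ _ _ covP trivP).
have rin g : rr g \in Gp by case: (@fact_in _ _ _ covM g).
have ract_eq g : Defs.ract Gp Gm (gp g) (gm g) = rr g by rewrite /Defs.ract gpm.
have GA : forall g h u : gT, u \in Gp -> rr g = gp h -> u = (g * gm h)%g ->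
    rr h = u /\ gp g = u.
  move=> g h u Hu Hr E; split.
    have Eh : h = ((fact1 Gm Gp g)^-1 * u)%g.
      set a := fact1 Gm Gp g.
      have Ega : g = (a * rr g)%g by rewrite /a /rr fact_mul.
      rewrite E Ega Hr -mulgA gpm; exact: (esym (mulKg a h)).
    rewrite Eh; case: (@fact_uniq _ _ _ covM trivM ((fact1 Gm Gp g)^-1)%g u) => //.
    by rewrite groupV; case: (@fact_in _ _ _ covM g).
  have Eg : g = (u * (gm h)^-1)%g by rewrite E mulgK.
  by rewrite Eg; case: (gp_uniq u ((gm h)^-1)%g) => //; rewrite groupV.
have GB : forall h g' : gT, (h * gm g')%g \in Gp -> gm g' = ((gm h)^-1)%g.
  move=> h g' H.
  have E : (gm h * gm g' = 1)%g.
    apply: trivM; first by rewrite groupM ?gmin.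
    have -> : (gm h * gm g' = (gp h)^-1 * (h * gm g'))%g.
      by rewrite /gm /gp /gminus /gplus /fact2 !mulgA.
    by rewrite groupM ?groupV ?gpin.
  by rewrite -(mulKg (gm h) (gm g')) E mulg1.
have c_nz : forall g h k, mul_coef Gp Gm R[i] g h k != 0 ->
    rr g = gp h /\ k = (g * gm h)%g.
  move=> g h k; rewrite /mul_coef ract_eq.
  case: andP => [[/eqP a /eqP b] _ | _] //; by rewrite mulr0n eqxx.
have c_one : forall g h k, rr g = gp h -> k = (g * gm h)%g ->
    mul_coef Gp Gm R[i] g h k = 1.
  by move=> g h k a b; rewrite /mul_coef ract_eq a b !eqxx.
pose term (A B : H2 gT R[i]) (g h k : gT * gT) :=
  A g * B h * mul_coef Gp Gm R[i] g.1 h.1 k.1 * mul_coef Gp Gm R[i] g.2 h.2 k.2.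
have mul2E : forall A B k, mul2 Gp Gm A B k = \sum_g \sum_h term A B g h k.
  by move=> A B k; rewrite /mul2 ffunE.
have tpos : forall A B g h k, positive2 A -> positive2 B -> 0 <= term A B g h k.
  by move=> A B g h k pA pB; rewrite /term /mul_coef !mulr_ge0 ?ler0n.
have sum_zero : forall A B k, positive2 A -> positive2 B -> mul2 Gp Gm A B k = 0 ->
    forall g h, term A B g h k = 0.
  move=> A B k pA pB; rewrite mul2E => S g h.
  have S1 : \sum_h term A B g h k = 0.
    apply: (psumr_eq0P _ S) => // g' _; apply: sumr_ge0 => h' _; exact: tpos.
  by apply: (psumr_eq0P _ S1) => // h' _; exact: tpos.
have sum_ex : forall A B k, mul2 Gp Gm A B k != 0 ->
    exists g h, term A B g h k != 0.
  move=> A B k; rewrite mul2E.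
  case: (pickP (fun x : (gT * gT) * (gT * gT) => term A B x.1 x.2 k != 0)).
    by move=> [g h] /= H _; exists g, h.
  move=> H; rewrite big1 ?eqxx // => g _; rewrite big1 // => h _.
  by have := H (g, h); rewrite /= => /negbFE/eqP.
have term_nz : forall A B g h k, term A B g h k != 0 ->
    [/\ A g != 0, B h != 0, mul_coef Gp Gm R[i] g.1 h.1 k.1 != 0
      & mul_coef Gp Gm R[i] g.2 h.2 k.2 != 0].
  move=> A B g h k; rewrite /term !mulf_eq0 !negb_or.
  by case/andP => /andP[/andP[-> ->] ->] ->.
have one2E : forall k, one2 Gp R[i] k = ((k.1 \in Gp) && (k.2 \in Gp))%:R.
  by move=> k; rewrite /one2 ffunE.
have KEY : forall u1 u2, u1 \in Gp -> u2 \in Gp ->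
    exists q, Ri q != 0 /\ exists p, [/\ Rm p != 0, gp p.1 = u1, gp p.2 = u2,
      rr q.1 = u1 & rr q.2 = u2].
  move=> u1 u2 H1 H2.
  have : mul2 Gp Gm Rm Ri (u1, u2) != 0 by rewrite inv1 one2E /= H1 H2 oner_eq0.
  case/sum_ex => p [q] /term_nz [Hp Hq /c_nz [r1 e1] /c_nz [r2 e2]].
  have [a1 b1] := GA _ _ _ H1 r1 e1.
  have [a2 b2] := GA _ _ _ H2 r2 e2.
  by exists q; split => //; exists p.
have UNIQ : forall q p, Ri q != 0 -> Rm p != 0 -> rr q.1 = gp p.1 -> rr q.2 = gp p.2 ->
    gm p.1 = ((gm q.1)^-1)%g /\ gm p.2 = ((gm q.2)^-1)%g.
  move=> q p Hq Hp r1 r2.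
  pose k := ((q.1 * gm p.1)%g, (q.2 * gm p.2)%g).
  case Hk: ((k.1 \in Gp) && (k.2 \in Gp)).
    by case/andP: Hk => /GB a /GB b.
  have Z : mul2 Gp Gm Ri Rm k = 0 by rewrite inv2 one2E Hk.
  have := sum_zero _ _ _ posi pos Z q p.
  rewrite /term (c_one q.1 p.1 k.1) // (c_one q.2 p.2 k.2) // !mulr1 => /eqP.
  by rewrite mulf_eq0 (negbTE Hq) (negbTE Hp).
exists [set p | Rm p != 0], (fun p => Rm p); split.
- by move=> p; rewrite inE lt0r => ->; exact: pos.
- move=> p p'; rewrite !inE => Hp Hp' [E1 E2].
  have [q [Hq [p0 [_ _ _ r1 r2]]]] := KEY _ _ (gpin p.1) (gpin p.2).
  have [m1 m2] := UNIQ q p Hq Hp r1 r2.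
  have [m1' m2'] := UNIQ q p' Hq Hp' (etrans r1 E1) (etrans r2 E2).
  have e1 : p.1 = p'.1.
    by rewrite -(gpm p.1) -(gpm p'.1) m1 m1'; congr (_ * _)%g.
  have e2 : p.2 = p'.2.
    by rewrite -(gpm p.2) -(gpm p'.2) m2 m2'; congr (_ * _)%g.
  by rewrite (surjective_pairing p) (surjective_pairing p') e1 e2.
- apply/setP => [[u1 u2]]; rewrite inE /=.
  apply/imsetP/andP.
    by case=> p _ [-> ->]; split; apply: gpin.
  case=> H1 H2; have [q [_ [p [Hp e1 e2 _ _]]]] := KEY _ _ H1 H2.
  by exists p; [rewrite inE | rewrite -e1 -e2].
- apply/ffunP => k; rewrite sum_ffunE.
  under eq_bigr => p _ do rewrite /GRing.scale /= ffunE ffunE.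
  case Hk: (Rm k == 0).
    rewrite (eqP Hk) big1 // => p _.
    by case: eqP => [<-|_] /=; rewrite ?(eqP Hk) ?scale0r ?scaler0.
  rewrite (bigD1 k) /=; last by rewrite inE Hk.
  rewrite eqxx /= -[Rm k *: 1]/(Rm k * 1) mulr1 big1 ?addr0 // => p /andP[_ /negbTE].
  by rewrite eq_sym => -> /=; rewrite scaler0.
Qed.
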